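(* For every projective fibration $g:A\to B$ in $\mathbf{Gpd}^{\mathbf{G}}$, the pullback functor $g^*:\mathbf{Gpd}^{\mathbf{G}}/B\to\mathbf{Gpd}^{\mathbf{G}}/A$ has a right adjoint $\Pi_g$, and $\Pi_g$ maps projective fibrations over $A$ to projective fibrations over $B$.
   Context: $\mathbf{Gpd}^{\mathbf{G}}$ is the category of (small) groupoids equipped with an involution and functors commuting with the involutions. A morphism of $\mathbf{Gpd}^{\mathbf{G}}$ is a projective fibration iff its underlying functor of groupoids is an isofibration (for every object $x$ of the domain and isomorphism $h:f(x)\to y$ in the codomain there is an isomorphism $\tilde h$ with domain $x$ and $f(\tilde h)=h$). *)

(* Defs.v *)
From Stdlib Require Import ProofIrrelevance.

Record Gpd : Type := MkGpd {
  Ob : Type; Ar : Type;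
  src : Ar -> Ob; tgt : Ar -> Ob;
  idn : Ob -> Ar;
  cmp : forall g f : Ar, tgt f = src g -> Ar;
  inv : Ar -> Ar;
  src_idn : forall x, src (idn x) = x;
  tgt_idn : forall x, tgt (idn x) = x;
  src_cmp : forall g f (H : tgt f = src g), src (cmp g f H) = src f;
  tgt_cmp : forall g f (H : tgt f = src g), tgt (cmp g f H) = tgt g;
  cmp_idl : forall f (H : tgt f = src (idn (tgt f))), cmp (idn (tgt f)) f H = f;
  cmp_idr : forall f (H : tgt (idn (src f)) = src f), cmp f (idn (src f)) H = f;
  cmp_assoc : forall h g f (H1 : tgt f = src g) (H2 : tgt (cmp g f H1) = src h)
                (H3 : tgt g = src h) (H4 : tgt f = src (cmp h g H3)),
                cmp h (cmp g f H1) H2 = cmp (cmp h g H3) f H4;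
  src_inv : forall f, src (inv f) = tgt f;
  tgt_inv : forall f, tgt (inv f) = src f;
  cmp_invl : forall f (H : tgt f = src (inv f)), cmp (inv f) f H = idn (src f);
  cmp_invr : forall f (H : tgt (inv f) = src f), cmp f (inv f) H = idn (tgt f)
}.
Arguments src {_} _. Arguments tgt {_} _. Arguments idn {_} _.
Arguments cmp {_} _ _ _. Arguments inv {_} _.

Lemma cmp_congr (G : Gpd) (g g' f f' : Ar G) (H : tgt f = src g) (H' : tgt f' = src g') :
  g = g' -> f = f' -> cmp g f H = cmp g' f' H'.
Proof. intros e1 e2; subst; f_equal; apply proof_irrelevance. Qed.

Record Fn (G1 G2 : Gpd) := MkFn {
  fo : Ob G1 -> Ob G2; fa : Ar G1 -> Ar G2;
  fn_src : forall f, src (fa f) = fo (src f);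
  fn_tgt : forall f, tgt (fa f) = fo (tgt f);
  fn_idn : forall x, fa (idn x) = idn (fo x);
  fn_cmp : forall g f (H : tgt f = src g) (H' : tgt (fa f) = src (fa g)),
             fa (cmp g f H) = cmp (fa g) (fa f) H'
}.
Arguments MkFn {G1 G2} _ _ _ _ _ _.
Arguments fo {G1 G2} _ _. Arguments fa {G1 G2} _ _.
Arguments fn_src {G1 G2} _ _. Arguments fn_tgt {G1 G2} _ _.
Arguments fn_idn {G1 G2} _ _. Arguments fn_cmp {G1 G2} _ _ _ _ _.

Lemma inv_unique (G : Gpd) (u v : Ar G) (H : tgt v = src u) :
  cmp u v H = idn (tgt u) -> v = inv u.
Proof.
  intro E.
  assert (K0 : tgt (idn (src (inv u))) = src (inv u)) by (rewrite tgt_idn; reflexivity).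
  rewrite <- (cmp_idr G (inv u) K0).
  assert (K1 : tgt (cmp u v H) = src (inv u))
    by (rewrite tgt_cmp, src_inv; reflexivity).
  rewrite (cmp_congr G (inv u) (inv u) (idn (src (inv u))) (cmp u v H) K0 K1 eq_refl)
    by (rewrite E, src_inv; reflexivity).
  assert (K3 : tgt u = src (inv u)) by (rewrite src_inv; reflexivity).
  assert (K4 : tgt v = src (cmp (inv u) u K3)) by (rewrite src_cmp; exact H).
  rewrite (cmp_assoc G (inv u) u v H K1 K3 K4).
  assert (K5 : tgt v = src (idn (tgt v))) by (rewrite src_idn; reflexivity).
  rewrite (cmp_congr G _ (idn (tgt v)) v v K4 K5); [ symmetry; apply cmp_idl | | reflexivity ].
  rewrite cmp_invl, H; reflexivity.
Qed.

Lemma fn_inv (G1 G2 : Gpd) (F : Fn G1 G2) (f : Ar G1) : fa F (inv f) = inv (fa F f).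
Proof.
  assert (H : tgt (fa F (inv f)) = src (fa F f))
    by (rewrite fn_tgt, fn_src, tgt_inv; reflexivity).
  apply (inv_unique G2 _ _ H).
  assert (K : tgt (inv f) = src f) by apply tgt_inv.
  rewrite <- (fn_cmp F f (inv f) K H), cmp_invr, fn_idn, fn_tgt; reflexivity.
Qed.

(* Groupoids with a (strict) involution: the objects of Gpd^G. *)
Record GpdG := MkGpdG {
  ggpd :> Gpd;
  tau : Fn ggpd ggpd;
  tau_o : forall x, fo tau (fo tau x) = x;
  tau_a : forall f, fa tau (fa tau f) = f
}.

Record GMor (X Y : GpdG) := MkGMor {
  gfn :> Fn X Y;
  gm_o : forall x, fo gfn (fo (tau X) x) = fo (tau Y) (fo gfn x);
  gm_a : forall f, fa gfn (fa (tau X) f) = fa (tau Y) (fa gfn f)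
}.
Arguments MkGMor {X Y} _ _ _.
Arguments gfn {X Y} _. Arguments gm_o {X Y} _ _. Arguments gm_a {X Y} _ _.

(* Projective fibrations: the underlying functor is an isofibration. *)
Definition proj_fib (X Y : GpdG) (p : GMor X Y) : Prop :=
  forall (x : Ob X) (h : Ar Y), src h = fo p x ->
    exists ht : Ar X, src ht = x /\ fa p ht = h.
Arguments proj_fib {X Y} _.

Record Over (B : GpdG) := MkOver { tot : GpdG; str : GMor tot B }.
Arguments MkOver {B} _ _. Arguments tot {B} _. Arguments str {B} _.

Record OMor (B : GpdG) (X Y : Over B) := MkOMor {
  om :> GMor (tot X) (tot Y);
  om_o : forall x, fo (str Y) (fo om x) = fo (str X) x;
  om_a : forall f, fa (str Y) (fa om f) = fa (str X) f
}.
Arguments MkOMor {B X Y} _ _ _.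
Arguments om {B X Y} _. Arguments om_o {B X Y} _ _. Arguments om_a {B X Y} _ _.

Lemma sig_eq (T : Type) (P : T -> Prop) (z w : sig P) :
  proj1_sig z = proj1_sig w -> z = w.
Proof.
  destruct z as [z pz], w as [w pw]; simpl; intros ->.
  f_equal; apply proof_irrelevance.
Qed.

Section Pullback.
Variables (A B : GpdG) (g : GMor A B) (X : Over B).

Definition PO := {p : Ob A * Ob (tot X) | fo g (fst p) = fo (str X) (snd p)}.
Definition PA := {p : Ar A * Ar (tot X) | fa g (fst p) = fa (str X) (snd p)}.

Lemma pf_src (p : Ar A * Ar (tot X)) :
  fa g (fst p) = fa (str X) (snd p) -> fo g (src (fst p)) = fo (str X) (src (snd p)).
Proof. intro e; rewrite <- (fn_src g), <- (fn_src (str X)), e; reflexivity. Qed.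
Lemma pf_tgt (p : Ar A * Ar (tot X)) :
  fa g (fst p) = fa (str X) (snd p) -> fo g (tgt (fst p)) = fo (str X) (tgt (snd p)).
Proof. intro e; rewrite <- (fn_tgt g), <- (fn_tgt (str X)), e; reflexivity. Qed.
Lemma pf_idn (p : Ob A * Ob (tot X)) :
  fo g (fst p) = fo (str X) (snd p) -> fa g (idn (fst p)) = fa (str X) (idn (snd p)).
Proof. intro e; rewrite (fn_idn g), (fn_idn (str X)), e; reflexivity. Qed.
Lemma pf_inv (p : Ar A * Ar (tot X)) :
  fa g (fst p) = fa (str X) (snd p) -> fa g (inv (fst p)) = fa (str X) (inv (snd p)).
Proof. intro e; rewrite (fn_inv _ _ g), (fn_inv _ _ (str X)), e; reflexivity. Qed.
Lemma pf_cmp (a2 a1 : Ar A) (e2 e1 : Ar (tot X))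
  (E2 : fa g a2 = fa (str X) e2) (E1 : fa g a1 = fa (str X) e1)
  (HA : tgt a1 = src a2) (HX : tgt e1 = src e2) :
  fa g (cmp a2 a1 HA) = fa (str X) (cmp e2 e1 HX).
Proof.
  assert (H1 : tgt (fa g a1) = src (fa g a2))
    by (rewrite (fn_src g), (fn_tgt g), HA; reflexivity).
  assert (H2 : tgt (fa (str X) e1) = src (fa (str X) e2))
    by (rewrite (fn_src (str X)), (fn_tgt (str X)), HX; reflexivity).
  rewrite (fn_cmp g a2 a1 HA H1), (fn_cmp (str X) e2 e1 HX H2).
  apply cmp_congr; assumption.
Qed.

Definition Psrc (z : PA) : PO :=
  exist _ (src (fst (proj1_sig z)), src (snd (proj1_sig z))) (pf_src _ (proj2_sig z)).
Definition Ptgt (z : PA) : PO :=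
  exist _ (tgt (fst (proj1_sig z)), tgt (snd (proj1_sig z))) (pf_tgt _ (proj2_sig z)).
Definition Pidn (z : PO) : PA :=
  exist _ (idn (fst (proj1_sig z)), idn (snd (proj1_sig z))) (pf_idn _ (proj2_sig z)).
Definition Pinv (z : PA) : PA :=
  exist _ (inv (fst (proj1_sig z)), inv (snd (proj1_sig z))) (pf_inv _ (proj2_sig z)).
Definition Pcmp (z2 z1 : PA) (H : Ptgt z1 = Psrc z2) : PA :=
  exist _ (cmp (fst (proj1_sig z2)) (fst (proj1_sig z1))
               (f_equal (fun w => fst (proj1_sig w)) H),
           cmp (snd (proj1_sig z2)) (snd (proj1_sig z1))
               (f_equal (fun w => snd (proj1_sig w)) H))
        (pf_cmp _ _ _ _ (proj2_sig z2) (proj2_sig z1) _ _).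

Ltac pb_solve :=
  intros; apply sig_eq; simpl;
  repeat match goal with z : PA |- _ => destruct z as [[? ?] ?] end;
  repeat match goal with z : PO |- _ => destruct z as [[? ?] ?] end;
  simpl in *.

Definition PGpd : Gpd.
Proof.
  refine (MkGpd PO PA Psrc Ptgt Pidn Pcmp Pinv _ _ _ _ _ _ _ _ _ _ _).
  - pb_solve; rewrite !src_idn; reflexivity.
  - pb_solve; rewrite !tgt_idn; reflexivity.
  - pb_solve; rewrite !src_cmp; reflexivity.
  - pb_solve; rewrite !tgt_cmp; reflexivity.
  - pb_solve; rewrite !cmp_idl; reflexivity.
  - pb_solve; rewrite !cmp_idr; reflexivity.
  - pb_solve; f_equal; apply cmp_assoc.
  - pb_solve; rewrite !src_inv; reflexivity.
  - pb_solve; rewrite !tgt_inv; reflexivity.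
  - pb_solve; rewrite !cmp_invl; reflexivity.
  - pb_solve; rewrite !cmp_invr; reflexivity.
Defined.

Lemma pf_tau_o (p : Ob A * Ob (tot X)) :
  fo g (fst p) = fo (str X) (snd p) ->
  fo g (fo (tau A) (fst p)) = fo (str X) (fo (tau (tot X)) (snd p)).
Proof. intro e; rewrite (gm_o g), (gm_o (str X)), e; reflexivity. Qed.
Lemma pf_tau_a (p : Ar A * Ar (tot X)) :
  fa g (fst p) = fa (str X) (snd p) ->
  fa g (fa (tau A) (fst p)) = fa (str X) (fa (tau (tot X)) (snd p)).
Proof. intro e; rewrite (gm_a g), (gm_a (str X)), e; reflexivity. Qed.

Definition Ptau : Fn PGpd PGpd.
Proof.
  refine (@MkFn PGpd PGpd
    (fun z => exist _ (fo (tau A) (fst (proj1_sig z)), fo (tau (tot X)) (snd (proj1_sig z)))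
                     (pf_tau_o _ (proj2_sig z)))
    (fun z => exist _ (fa (tau A) (fst (proj1_sig z)), fa (tau (tot X)) (snd (proj1_sig z)))
                     (pf_tau_a _ (proj2_sig z))) _ _ _ _).
  - pb_solve; rewrite !fn_src; reflexivity.
  - pb_solve; rewrite !fn_tgt; reflexivity.
  - pb_solve; rewrite !fn_idn; reflexivity.
  - pb_solve; f_equal; apply fn_cmp.
Defined.

Definition PGpdG : GpdG.
Proof.
  refine (MkGpdG PGpd Ptau _ _).
  - intros [[a e] E]; apply sig_eq; simpl; rewrite !tau_o; reflexivity.
  - intros [[a e] E]; apply sig_eq; simpl; rewrite !tau_a; reflexivity.
Defined.

Definition Pfst_fn : Fn PGpdG A.
Proof.
  refine (@MkFn PGpdG A (fun z => fst (proj1_sig z)) (fun z => fst (proj1_sig z)) _ _ _ _);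
    intros;
    repeat match goal with z : PA |- _ => destruct z as [[? ?] ?] end;
    repeat match goal with z : PO |- _ => destruct z as [[? ?] ?] end;
    simpl; try reflexivity; apply cmp_congr; reflexivity.
Defined.

Definition Pfst : GMor PGpdG A := MkGMor Pfst_fn (fun _ => eq_refl) (fun _ => eq_refl).

Definition pb : Over A := MkOver PGpdG Pfst.

End Pullback.
Arguments pb {A B} g X.

Section PullbackMap.
Variables (A B : GpdG) (g : GMor A B) (X X' : Over B) (u : OMor B X X').

Lemma pf_mo (p : Ob A * Ob (tot X)) :
  fo g (fst p) = fo (str X) (snd p) -> fo g (fst p) = fo (str X') (fo u (snd p)).
Proof. intro e; rewrite (om_o u); exact e. Qed.
Lemma pf_ma (p : Ar A * Ar (tot X)) :
  fa g (fst p) = fa (str X) (snd p) -> fa g (fst p) = fa (str X') (fa u (snd p)).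
Proof. intro e; rewrite (om_a u); exact e. Qed.

Definition pbfn : Fn (tot (pb g X)) (tot (pb g X')).
Proof.
  refine (@MkFn (tot (pb g X)) (tot (pb g X'))
    (fun z : PO A B g X => exist _ (fst (proj1_sig z), fo u (snd (proj1_sig z)))
                     (pf_mo _ (proj2_sig z)))
    (fun z : PA A B g X => exist _ (fst (proj1_sig z), fa u (snd (proj1_sig z)))
                     (pf_ma _ (proj2_sig z))) _ _ _ _);
  intros; apply sig_eq; simpl.
  - rewrite fn_src; reflexivity.
  - rewrite fn_tgt; reflexivity.
  - rewrite fn_idn; reflexivity.
  - f_equal; [ apply cmp_congr; reflexivity | apply fn_cmp ].
Defined.

Definition pbgm : GMor (tot (pb g X)) (tot (pb g X')).
Proof.
  refine (MkGMor pbfn _ _); intros; apply sig_eq; simpl; f_equal.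
  - apply (gm_o u).
  - apply (gm_a u).
Defined.

Definition pbmap : OMor A (pb g X) (pb g X') :=
  MkOMor pbgm (fun _ => eq_refl) (fun _ => eq_refl).

End PullbackMap.
Arguments pbmap {A B} g {X X'} u.

Definition fn_eq (G1 G2 : Gpd) (F F' : Fn G1 G2) : Prop :=
  (forall x, fo F x = fo F' x) /\ (forall f, fa F f = fa F' f).
Definition comp_is (G1 G2 G3 : Gpd) (F2 : Fn G2 G3) (F1 : Fn G1 G2) (F : Fn G1 G3) : Prop :=
  (forall x, fo F2 (fo F1 x) = fo F x) /\ (forall f, fa F2 (fa F1 f) = fa F f).
Arguments fn_eq {G1 G2} _ _. Arguments comp_is {G1 G2 G3} _ _ _.

(* (Pi, eps) is a right adjoint of g^* : Gpd^G/B -> Gpd^G/A, given by universal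
   arrows: for every Y over A, eps Y : g^*(Pi Y) -> Y is couniversal, i.e. every
   f : g^* X -> Y over A factors as eps Y o g^*(u) for a unique u : X -> Pi Y over B. *)
Definition right_adjoint (A B : GpdG) (g : GMor A B) (Pi : Over A -> Over B)
  (eps : forall Y : Over A, OMor A (pb g (Pi Y)) Y) : Prop :=
  forall (Y : Over A) (X : Over B) (f : OMor A (pb g X) Y),
    exists u : OMor B X (Pi Y),
      comp_is (eps Y) (pbmap g u) f /\
      (forall u' : OMor B X (Pi Y), comp_is (eps Y) (pbmap g u') f -> fn_eq u' u).
Arguments right_adjoint {A B} g Pi eps.

(* Main.v *)
Require Import Defs.
From Stdlib Require Import ProofIrrelevance FunctionalExtensionality ClassicalEpsilon.

Definition C {G : Gpd} (g f : Ar G) : Ar G :=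
  match excluded_middle_informative (tgt f = src g) with
  | left H => cmp g f H | right _ => f end.

Lemma C_spec (G : Gpd) (g f : Ar G) (H : tgt f = src g) : C g f = cmp g f H.
Proof. unfold C; destruct (excluded_middle_informative _) as [H'|n];
  [apply cmp_congr; reflexivity | contradiction]. Qed.

Lemma C_cmp (G : Gpd) (g f : Ar G) H : cmp g f H = C g f.
Proof. symmetry; apply C_spec. Qed.

Section GL.
Variable G : Gpd.
Implicit Types f g h : Ar G.

Lemma src_C g f : tgt f = src g -> src (C g f) = src f.
Proof. intro H; rewrite (C_spec _ _ _ H); apply src_cmp. Qed.
Lemma tgt_C g f : tgt f = src g -> tgt (C g f) = tgt g.
Proof. intro H; rewrite (C_spec _ _ _ H); apply tgt_cmp. Qed.
Lemma C_idl x f : tgt f = x -> C (idn x) f = f.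
Proof. intro; subst. assert (H : tgt f = src (idn (tgt f))) by (rewrite src_idn; auto).
  rewrite (C_spec _ _ _ H); apply cmp_idl. Qed.
Lemma C_idr x f : src f = x -> C f (idn x) = f.
Proof. intro; subst. assert (H : tgt (idn (src f)) = src f) by (rewrite tgt_idn; auto).
  rewrite (C_spec _ _ _ H); apply cmp_idr. Qed.
Lemma C_assoc h g f : tgt f = src g -> tgt g = src h -> C h (C g f) = C (C h g) f.
Proof. intros H1 H3.
  assert (H2 : tgt (cmp g f H1) = src h) by (rewrite tgt_cmp; auto).
  assert (H4 : tgt f = src (cmp h g H3)) by (rewrite src_cmp; auto).
  rewrite (C_spec _ _ _ H1), (C_spec _ _ _ H2), (C_spec _ _ _ H3), (C_spec _ _ _ H4).
  apply cmp_assoc. Qed.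
Lemma C_invl f : C (inv f) f = idn (src f).
Proof. assert (H : tgt f = src (inv f)) by (rewrite src_inv; auto).
  rewrite (C_spec _ _ _ H); apply cmp_invl. Qed.
Lemma C_invr f : C f (inv f) = idn (tgt f).
Proof. assert (H : tgt (inv f) = src f) by (rewrite tgt_inv; auto).
  rewrite (C_spec _ _ _ H); apply cmp_invr. Qed.
Lemma inv_inv f : inv (inv f) = f.
Proof. symmetry. assert (H : tgt f = src (inv f)) by (rewrite src_inv; auto).
  apply (inv_unique G _ _ H). rewrite C_cmp, C_invl, tgt_inv; auto. Qed.
Lemma inv_C g f : tgt f = src g -> inv (C g f) = C (inv f) (inv g).
Proof. intro H0. symmetry.
  assert (H : tgt (C (inv f) (inv g)) = src (C g f)).
  { rewrite tgt_C, src_C, tgt_inv; auto. rewrite tgt_inv, src_inv; auto. }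
  apply (inv_unique G _ _ H). rewrite C_cmp.
  rewrite C_assoc, <- (C_assoc g f), C_invr, C_idr, C_invr, tgt_C; auto.
  all: try rewrite ?tgt_inv, ?src_inv, ?src_C, ?tgt_C, ?src_idn, ?tgt_idn; auto.
  all: try rewrite ?tgt_inv, ?src_inv; auto.
Qed.
End GL.

Lemma fa_C (G1 G2 : Gpd) (F : Fn G1 G2) (g f : Ar G1) :
  tgt f = src g -> fa F (C g f) = C (fa F g) (fa F f).
Proof. intro H.
  assert (H' : tgt (fa F f) = src (fa F g)) by (rewrite fn_src, fn_tgt, H; auto).
  rewrite (C_spec _ _ _ H), (C_spec _ _ _ H'); apply fn_cmp. Qed.


Ltac gs_extra := fail.
Ltac gs_fin := fail.
Ltac gs := repeat (first [ rewrite src_idn | rewrite tgt_idn | rewrite src_inv | rewrite tgt_inv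
   | rewrite fn_src | rewrite fn_tgt | rewrite src_C by gs | rewrite tgt_C by gs | gs_extra ]);
   first [ reflexivity | assumption | (symmetry; assumption) | congruence | gs_fin ].

Lemma C_cancel_l (G : Gpd) (a z : Ar G) : tgt z = src a -> C (inv a) (C a z) = z.
Proof. intro H. rewrite C_assoc, C_invl, C_idl; auto; gs. Qed.
Lemma C_cancel_l2 (G : Gpd) (a z : Ar G) : tgt z = tgt a -> C a (C (inv a) z) = z.
Proof. intro H. rewrite C_assoc, C_invr, C_idl; auto; gs. Qed.

Ltac rnorm := repeat (rewrite <- C_assoc by gs).

Section PiC.
Variables (A B : GpdG) (g : GMor A B) (Y : Over A).
Notation TY := (tot Y).
Notation pY := (str Y).

Definition Sec (h : Ar B) := forall f : Ar A, fa g f = h -> Ar TY.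

Lemma sec_congr h (phi : Sec h) f1 f2 e1 e2 : f1 = f2 -> phi f1 e1 = phi f2 e2.
Proof. intro; subst; f_equal; apply proof_irrelevance. Qed.

Lemma sec_rw h (phi : Sec h) f1 f2 e1 (E : f1 = f2) :
  phi f1 e1 = phi f2 (eq_ind f1 (fun f => fa g f = h) e1 f2 E).
Proof. subst; reflexivity. Qed.

Record IsArr (b : Ob B) (s : Sec (idn b)) (b' : Ob B) (s' : Sec (idn b')) (h : Ar B) (phi : Sec h) : Prop := {
 ia_src : src h = b; ia_tgt : tgt h = b';
 ia_p : forall f e, fa pY (phi f e) = f;
 ia_m1 : forall f k e ek, tgt k = src f -> tgt (s k ek) = src (phi f e);
 ia_m2 : forall f k e ek, tgt f = src k -> tgt (phi f e) = src (s' k ek);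
 ia_c1 : forall f k e ek efk, tgt k = src f -> phi (C f k) efk = C (phi f e) (s k ek);
 ia_c2 : forall f k e ek ekf, tgt f = src k -> phi (C k f) ekf = C (s' k ek) (phi f e) }.

Record PiOb := MkPiOb { ob_b : Ob B; ob_s : Sec (idn ob_b);
  ob_ok : IsArr ob_b ob_s ob_b ob_s (idn ob_b) ob_s }.
Record PiAr := MkPiAr { ar_s : PiOb; ar_t : PiOb; ar_h : Ar B; ar_phi : Sec ar_h;
  ar_ok : IsArr (ob_b ar_s) (ob_s ar_s) (ob_b ar_t) (ob_s ar_t) ar_h ar_phi }.

Lemma ob_eq (x y : PiOb) : ob_b x = ob_b y ->
  (forall f e1 e2, ob_s x f e1 = ob_s y f e2) -> x = y.
Proof. destruct x as [b s ok], y as [b' s' ok']; simpl; intros Eb Es. subst b'.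
  assert (s = s') by (extensionality f; extensionality e; apply Es). subst; f_equal; apply proof_irrelevance. Qed.

Lemma ar_eq (u v : PiAr) : ar_s u = ar_s v -> ar_t u = ar_t v -> ar_h u = ar_h v ->
  (forall f e1 e2, ar_phi u f e1 = ar_phi v f e2) -> u = v.
Proof. destruct u as [x1 y1 h p ok], v as [x2 y2 h' p' ok']; simpl; intros E1 E2 Eh Es. subst.
  assert (p = p') by (extensionality f; extensionality e; apply Es). subst; f_equal; apply proof_irrelevance. Qed.

Lemma phi_congr (u v : PiAr) f e1 e2 : u = v -> ar_phi u f e1 = ar_phi v f e2.
Proof. intro; subst; apply sec_congr; auto. Qed.

Lemma idpf (b : Ob B) a : fo g a = b -> fa g (idn a) = idn b.
Proof. intro; subst; apply fn_idn. Qed.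
Definition O (x : PiOb) a (E : fo g a = ob_b x) : Ob TY := src (ob_s x (idn a) (idpf _ _ E)).
Lemma O_congr x a1 a2 E1 E2 : a1 = a2 -> O x a1 E1 = O x a2 E2.
Proof. intro; subst; unfold O; f_equal; apply sec_congr; auto. Qed.

Lemma srcpf (h : Ar B) b f : src h = b -> fa g f = h -> fo g (src f) = b.
Proof. intros; subst; rewrite <- fn_src; auto. Qed.
Lemma tgtpf (h : Ar B) b f : tgt h = b -> fa g f = h -> fo g (tgt f) = b.
Proof. intros; subst; rewrite <- fn_tgt; auto. Qed.

Lemma ia_srcO b s b' s' h phi (ok : IsArr b s b' s' h phi) (okx : IsArr b s b s (idn b) s) f e E :
  src (phi f e) = src (s (idn (src f)) E).
Proof.
  assert (E2 : fa g (C f (idn (src f))) = h) by (rewrite C_idr; auto).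
  rewrite (sec_congr _ phi f _ e E2) by (rewrite C_idr; auto).
  rewrite (ia_c1 _ _ _ _ _ _ ok f (idn (src f)) e E E2) by gs.
  rewrite src_C; auto. apply (ia_m1 _ _ _ _ _ _ ok); gs.
Qed.

Lemma ia_tgtO b s b' s' h phi (ok : IsArr b s b' s' h phi) f e E :
  tgt (phi f e) = tgt (s' (idn (tgt f)) E).
Proof.
  assert (E2 : fa g (C (idn (tgt f)) f) = h) by (rewrite C_idl; auto).
  rewrite (sec_congr _ phi f _ e E2) by (rewrite C_idl; auto).
  rewrite (ia_c2 _ _ _ _ _ _ ok f (idn (tgt f)) e E E2) by gs.
  rewrite tgt_C; auto. apply (ia_m2 _ _ _ _ _ _ ok); gs.
Qed.

Lemma ob_st (x : PiOb) a E : tgt (ob_s x (idn a) E) = src (ob_s x (idn a) E).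
Proof. apply (ia_m1 _ _ _ _ _ _ (ob_ok x)); gs. Qed.

Lemma ob_src x k ek : src (ob_s x k ek) = O x (src k) (srcpf _ _ k (src_idn _ _) ek).
Proof. unfold O. apply (ia_srcO _ _ _ _ _ _ (ob_ok x) (ob_ok x)). Qed.
Lemma ob_tgt x k ek : tgt (ob_s x k ek) = O x (tgt k) (tgtpf _ _ k (tgt_idn _ _) ek).
Proof. unfold O. rewrite (ia_tgtO _ _ _ _ _ _ (ob_ok x) k ek (idpf _ _ (tgtpf _ _ k (tgt_idn _ _) ek))).
  apply ob_st. Qed.
Lemma ar_srcO (u : PiAr) f e : src (ar_phi u f e) = O (ar_s u) (src f) (srcpf _ _ f (ia_src _ _ _ _ _ _ (ar_ok u)) e).
Proof. unfold O. apply (ia_srcO _ _ _ _ _ _ (ar_ok u) (ob_ok _)). Qed.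
Lemma ar_tgtO (u : PiAr) f e : tgt (ar_phi u f e) = O (ar_t u) (tgt f) (tgtpf _ _ f (ia_tgt _ _ _ _ _ _ (ar_ok u)) e).
Proof. unfold O. rewrite (ia_tgtO _ _ _ _ _ _ (ar_ok u) f e (idpf _ _ (tgtpf _ _ f (ia_tgt _ _ _ _ _ _ (ar_ok u)) e))).
  apply ob_st. Qed.

Ltac gs_extra ::= first [ rewrite ob_src | rewrite ob_tgt | rewrite ar_srcO | rewrite ar_tgtO ].
Lemma O_congr2 x1 x2 a1 a2 E1 E2 : x1 = x2 -> a1 = a2 -> O x1 a1 E1 = O x2 a2 E2.
Proof. intros; subst; apply O_congr; auto. Qed.
Ltac gs_fin ::= apply O_congr2; [ first [reflexivity | assumption | (symmetry; assumption)] | gs ].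

Lemma test2 (x : PiOb) k1 k2 e1 e2 : tgt k1 = src k2 -> tgt (ob_s x k1 e1) = src (ob_s x k2 e2).
Proof. intros; gs. Qed.


Variable gfib : proj_fib g.

Definition lft a (h : Ar B) (H : src h = fo g a) : Ar A :=
  proj1_sig (constructive_indefinite_description _ (gfib a h H)).
Lemma lft_src a h H : src (lft a h H) = a.
Proof. unfold lft; destruct (constructive_indefinite_description _ _) as [x [? ?]]; auto. Qed.
Lemma lft_g a h H : fa g (lft a h H) = h.
Proof. unfold lft; destruct (constructive_indefinite_description _ _) as [x [? ?]]; auto. Qed.

Lemma hcomp (u v : PiAr) : ar_t u = ar_s v -> tgt (ar_h u) = src (ar_h v).
Proof. intro H; rewrite (ia_tgt _ _ _ _ _ _ (ar_ok u)), (ia_src _ _ _ _ _ _ (ar_ok v)), H; auto. Qed.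

Lemma chi_pf1 (u v : PiAr) (H : ar_t u = ar_s v) f (e : fa g f = C (ar_h v) (ar_h u)) :
  src (ar_h u) = fo g (src f).
Proof. rewrite <- fn_src, e, src_C; auto. apply hcomp; auto. Qed.

Lemma chi_pf2 (u v : PiAr) (H : ar_t u = ar_s v) f (e : fa g f = C (ar_h v) (ar_h u)) :
  fa g (C f (inv (lft (src f) (ar_h u) (chi_pf1 u v H f e)))) = ar_h v.
Proof. pose proof (hcomp u v H).
  rewrite fa_C, fn_inv, lft_g, e, <- C_assoc, C_invr, C_idr; auto.
  all: try rewrite ?tgt_inv, ?lft_src; auto; gs.
Qed.

Definition chi (u v : PiAr) (H : ar_t u = ar_s v) : Sec (C (ar_h v) (ar_h u)) :=
  fun f e => C (ar_phi v _ (chi_pf2 u v H f e)) (ar_phi u _ (lft_g _ _ (chi_pf1 u v H f e))).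

Lemma chi_wd (u v : PiAr) (H : ar_t u = ar_s v) f1 f2 e1 e2 e :
  tgt f1 = src f2 -> chi u v H (C f2 f1) e = C (ar_phi v f2 e2) (ar_phi u f1 e1).
Proof. intro H12. unfold chi.
  generalize (chi_pf2 u v H (C f2 f1) e) (lft_g (src (C f2 f1)) (ar_h u) (chi_pf1 u v H (C f2 f1) e)).
  generalize (lft_src (src (C f2 f1)) (ar_h u) (chi_pf1 u v H (C f2 f1) e)).
  generalize (lft (src (C f2 f1)) (ar_h u) (chi_pf1 u v H (C f2 f1) e)). intros l Hl0 Ea El.
  destruct u as [su tu hu pu oku], v as [sv tv hv pv okv]; simpl in *. subst sv.
  assert (Hl : src l = src f1) by (rewrite Hl0; gs).
  set (k := C f1 (inv l)).
  assert (Ek : fa g k = idn (ob_b tu)).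
  { unfold k; rewrite fa_C, fn_inv, El, e1, C_invr, (ia_tgt _ _ _ _ _ _ oku); auto; gs. }
  assert (E2k : fa g (C f2 k) = hv).
  { rewrite fa_C, Ek, e2, C_idr; auto. apply (ia_src _ _ _ _ _ _ okv). unfold k; gs. }
  rewrite (sec_congr _ pv _ (C f2 k) Ea E2k) by (unfold k; rewrite C_assoc; auto; gs).
  rewrite (ia_c1 _ _ _ _ _ _ okv f2 k e2 Ek E2k) by (unfold k; gs).
  assert (Ekl : fa g (C k l) = hu) by (rewrite fa_C, Ek, El, C_idl; auto; [ apply (ia_tgt _ _ _ _ _ _ oku) | unfold k; gs]).
  rewrite (sec_congr _ pu f1 (C k l) e1 Ekl).
  2: { unfold k; rewrite <- C_assoc, C_invl, C_idr; auto; gs. }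
  rewrite (ia_c2 _ _ _ _ _ _ oku l k El Ek Ekl) by (unfold k; gs).
  rewrite C_assoc; auto.
  - apply (ia_m2 _ _ _ _ _ _ oku); unfold k; gs.
  - apply (ia_m1 _ _ _ _ _ _ okv); unfold k; gs.
Qed.


Lemma chi_dec (u v : PiAr) (H : ar_t u = ar_s v) f e :
  exists f1 f2 e1 e2, tgt f1 = src f2 /\ C f2 f1 = f /\
    chi u v H f e = C (ar_phi v f2 e2) (ar_phi u f1 e1).
Proof.
  exists (lft (src f) (ar_h u) (chi_pf1 u v H f e)), (C f (inv (lft (src f) (ar_h u) (chi_pf1 u v H f e)))),
    (lft_g _ _ _), (chi_pf2 u v H f e).
  pose proof (lft_src (src f) (ar_h u) (chi_pf1 u v H f e)).
  split; [ | split; [ | reflexivity ] ].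
  - gs.
  - rewrite <- C_assoc, C_invl, C_idr; auto; gs.
Qed.

Lemma chi_ok (u v : PiAr) (H : ar_t u = ar_s v) :
  IsArr (ob_b (ar_s u)) (ob_s (ar_s u)) (ob_b (ar_t v)) (ob_s (ar_t v)) (C (ar_h v) (ar_h u)) (chi u v H).
Proof.
  pose proof (hcomp u v H) as Hh.
  pose proof (ar_ok u) as oku. pose proof (ar_ok v) as okv.
  constructor.
  - rewrite src_C; auto. apply (ia_src _ _ _ _ _ _ oku).
  - rewrite tgt_C; auto. apply (ia_tgt _ _ _ _ _ _ okv).
  - intros f e. destruct (chi_dec u v H f e) as [f1 [f2 [e1 [e2 [H12 [Hf ->]]]]]].
    rewrite fa_C, (ia_p _ _ _ _ _ _ oku), (ia_p _ _ _ _ _ _ okv); auto. gs.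
  - intros f k e ek Hk. destruct (chi_dec u v H f e) as [f1 [f2 [e1 [e2 [H12 [Hf ->]]]]]].
    subst f. rewrite src_C in Hk by auto. gs.
  - intros f k e ek Hk. destruct (chi_dec u v H f e) as [f1 [f2 [e1 [e2 [H12 [Hf ->]]]]]].
    subst f. rewrite tgt_C in Hk by auto. gs.
  - intros f k e ek efk Hk. destruct (chi_dec u v H f e) as [f1 [f2 [e1 [e2 [H12 [Hf ->]]]]]].
    subst f. rewrite src_C in Hk by auto.
    assert (E1 : fa g (C f1 k) = ar_h u).
    { rewrite fa_C, e1, ek, C_idr; try solve [apply (ia_src _ _ _ _ _ _ oku) | gs]. }
    assert (EE : C (C f2 f1) k = C f2 (C f1 k)) by (rewrite C_assoc; auto; gs).
    rewrite (sec_rw _ (chi u v H) _ _ efk EE).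
    rewrite (chi_wd u v H (C f1 k) f2 E1 e2 _) by gs.
    rewrite (ia_c1 _ _ _ _ _ _ oku f1 k e1 ek E1) by gs.
    rewrite C_assoc; auto; gs.
  - intros f k e ek efk Hk. destruct (chi_dec u v H f e) as [f1 [f2 [e1 [e2 [H12 [Hf ->]]]]]].
    subst f. rewrite tgt_C in Hk by auto.
    assert (E2 : fa g (C k f2) = ar_h v).
    { rewrite fa_C, e2, ek, C_idl; try solve [apply (ia_tgt _ _ _ _ _ _ okv) | gs]. }
    assert (EE : C k (C f2 f1) = C (C k f2) f1) by (rewrite C_assoc; auto; gs).
    rewrite (sec_rw _ (chi u v H) _ _ efk EE).
    rewrite (chi_wd u v H f1 (C k f2) e1 E2 _) by gs.
    rewrite (ia_c2 _ _ _ _ _ _ okv f2 k e2 ek E2) by gs.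
    rewrite C_assoc; auto; gs.
Qed.


Lemma C_idem (G : Gpd) (x : Ar G) : tgt x = src x -> C x x = x -> x = idn (src x).
Proof. intros H E.
  assert (E2 : C (C x x) (inv x) = C x (inv x)) by (rewrite E; auto).
  rewrite <- C_assoc, C_invr, C_idr in E2; auto; try gs. all: try (rewrite E2, H; auto). Qed.

Lemma ob_idn (x : PiOb) a e : ob_s x (idn a) e = idn (src (ob_s x (idn a) e)).
Proof. apply C_idem. apply ob_st.
  assert (EE : idn a = C (idn a) (idn a)) by (rewrite C_idl; auto; gs).
  rewrite (sec_rw _ _ _ _ e EE) at 3.
  rewrite (ia_c1 _ _ _ _ _ _ (ob_ok x) (idn a) (idn a) e e _); auto; gs.
Qed.

Lemma ob_idn' (x : PiOb) a e E : ob_s x (idn a) e = idn (O x a E).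
Proof. rewrite ob_idn; unfold O; f_equal; f_equal; apply sec_congr; auto. Qed.

Lemma invpf (h : Ar B) k : fa g k = h -> fa g (inv k) = inv h.
Proof. intro; subst; apply fn_inv. Qed.

Lemma ob_inv (x : PiOb) k e e' : ob_s x (inv k) e' = inv (ob_s x k e).
Proof.
  assert (H : tgt (ob_s x (inv k) e') = src (ob_s x k e)) by gs.
  apply (inv_unique _ _ _ H). rewrite C_cmp.
  assert (EE : C k (inv k) = idn (tgt k)) by apply C_invr.
  assert (E3 : fa g (C k (inv k)) = idn (ob_b x)) by (rewrite EE, fn_idn; f_equal; rewrite <- fn_tgt, e; gs).
  rewrite <- (ia_c1 _ _ _ _ _ _ (ob_ok x) k (inv k) e e' E3) by gs.
  rewrite (sec_rw _ _ _ _ E3 EE), ob_idn. f_equal. gs.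
Qed.

Definition Qidn (x : PiOb) : PiAr := MkPiAr x x (idn (ob_b x)) (ob_s x) (ob_ok x).
Definition Qcmp (v u : PiAr) (H : ar_t u = ar_s v) : PiAr :=
  MkPiAr (ar_s u) (ar_t v) (C (ar_h v) (ar_h u)) (chi u v H) (chi_ok u v H).


Lemma invpf2 (h : Ar B) f : fa g f = inv h -> fa g (inv f) = h.
Proof. intro e; rewrite fn_inv, e, inv_inv; auto. Qed.

Definition phinv (u : PiAr) : Sec (inv (ar_h u)) :=
  fun f e => inv (ar_phi u (inv f) (invpf2 _ f e)).

Lemma idinvpf (b : Ob B) k : fa g k = idn b -> fa g (inv k) = idn b.
Proof. intro e; rewrite fn_inv, e. symmetry.
  assert (H : tgt (idn b) = src (idn b)) by gs.
  apply (inv_unique _ _ _ H). rewrite C_cmp, C_idl; gs. Qed.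

Lemma inv_ok (u : PiAr) :
  IsArr (ob_b (ar_t u)) (ob_s (ar_t u)) (ob_b (ar_s u)) (ob_s (ar_s u)) (inv (ar_h u)) (phinv u).
Proof.
  pose proof (ar_ok u) as ok. unfold phinv.
  constructor.
  - rewrite src_inv; apply (ia_tgt _ _ _ _ _ _ ok).
  - rewrite tgt_inv; apply (ia_src _ _ _ _ _ _ ok).
  - intros f e. rewrite fn_inv, (ia_p _ _ _ _ _ _ ok), inv_inv; auto.
  - intros f k e ek Hk. gs.
  - intros f k e ek Hk. gs.
  - intros f k e ek efk Hk.
    assert (EE : inv (C f k) = C (inv k) (inv f)) by (apply inv_C; auto).
    rewrite (sec_rw _ _ _ _ _ EE).
    rewrite (ia_c2 _ _ _ _ _ _ ok (inv f) (inv k) (invpf2 _ f e) (idinvpf _ k ek) _) by gs.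
    rewrite inv_C by gs. f_equal. rewrite (ob_inv _ k ek), inv_inv; auto.
  - intros f k e ek efk Hk.
    assert (EE : inv (C k f) = C (inv f) (inv k)) by (apply inv_C; auto).
    rewrite (sec_rw _ _ _ _ _ EE).
    rewrite (ia_c1 _ _ _ _ _ _ ok (inv f) (inv k) (invpf2 _ f e) (idinvpf _ k ek) _) by gs.
    rewrite inv_C by gs. f_equal. rewrite (ob_inv _ k ek), inv_inv; auto.
Qed.

Definition Qinv (u : PiAr) : PiAr := MkPiAr (ar_t u) (ar_s u) (inv (ar_h u)) (phinv u) (inv_ok u).


Lemma P_idl (f : PiAr) H : Qcmp (Qidn (ar_t f)) f H = f.
Proof. pose proof (ar_ok f) as ok. apply ar_eq; simpl; auto.
  - apply C_idl, (ia_tgt _ _ _ _ _ _ ok).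
  - intros f' e1 e2. destruct (chi_dec f (Qidn (ar_t f)) H f' e1) as [f1 [f2 [e1' [e2' [H12 [Hf ->]]]]]].
    simpl in *. subst f'.
    rewrite <- (ia_c2 _ _ _ _ _ _ ok f1 f2 e1' e2' e2 H12). auto.
Qed.

Lemma P_idr (f : PiAr) H : Qcmp f (Qidn (ar_s f)) H = f.
Proof. pose proof (ar_ok f) as ok. apply ar_eq; simpl; auto.
  - apply C_idr, (ia_src _ _ _ _ _ _ ok).
  - intros f' e1 e2. destruct (chi_dec (Qidn (ar_s f)) f H f' e1) as [f1 [f2 [e1' [e2' [H12 [Hf ->]]]]]].
    simpl in *. subst f'.
    rewrite <- (ia_c1 _ _ _ _ _ _ ok f2 f1 e2' e1' e2 H12). auto.
Qed.

Lemma P_assoc (w v u : PiAr) (H1 : ar_t u = ar_s v) (H2 : ar_t (Qcmp v u H1) = ar_s w)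
  (H3 : ar_t v = ar_s w) (H4 : ar_t u = ar_s (Qcmp w v H3)) :
  Qcmp w (Qcmp v u H1) H2 = Qcmp (Qcmp w v H3) u H4.
Proof. apply ar_eq; simpl; auto.
  - apply C_assoc; apply hcomp; auto.
  - intros f e1 e2.
    destruct (chi_dec (Qcmp v u H1) w H2 f e1) as [x1 [x2 [ex1 [ex2 [Hx [Hf ->]]]]]].
    simpl in *. subst f.
    destruct (chi_dec u v H1 x1 ex1) as [y1 [y2 [ey1 [ey2 [Hy [Hx1 ->]]]]]].
    subst x1. rewrite tgt_C in Hx by auto.
    assert (EE : C x2 (C y2 y1) = C (C x2 y2) y1) by (apply C_assoc; auto).
    rewrite (sec_rw _ _ _ _ _ EE).
    assert (E : fa g (C x2 y2) = C (ar_h w) (ar_h v)) by (rewrite fa_C, ex2, ey2; auto).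
    rewrite (chi_wd u (Qcmp w v H3) H4 y1 (C x2 y2) ey1 E _) by gs. simpl.
    rewrite (chi_wd v w H3 y2 x2 ey2 ex2 E) by auto.
    apply C_assoc; gs.
Qed.

Lemma P_invl (u : PiAr) H : Qcmp (Qinv u) u H = Qidn (ar_s u).
Proof. pose proof (ar_ok u) as ok. apply ar_eq; simpl; auto.
  - rewrite C_invl; f_equal; apply (ia_src _ _ _ _ _ _ ok).
  - intros f e1 e2. destruct (chi_dec u (Qinv u) H f e1) as [x1 [x2 [ex1 [ex2 [Hx [Hf ->]]]]]].
    simpl in *. subst f. unfold phinv.
    assert (EE : x1 = C (inv x2) (C x2 x1)) by (rewrite C_assoc, C_invl, C_idl; auto; gs).
    rewrite (sec_rw _ (ar_phi u) _ _ ex1 EE).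
    rewrite (ia_c1 _ _ _ _ _ _ ok (inv x2) (C x2 x1) (invpf2 _ x2 ex2) e2 _) by gs.
    rewrite C_assoc, C_invl, C_idl; auto; gs.
Qed.

Lemma P_invr (u : PiAr) H : Qcmp u (Qinv u) H = Qidn (ar_t u).
Proof. pose proof (ar_ok u) as ok. apply ar_eq; simpl; auto.
  - rewrite C_invr; f_equal; apply (ia_tgt _ _ _ _ _ _ ok).
  - intros f e1 e2. destruct (chi_dec (Qinv u) u H f e1) as [x1 [x2 [ex1 [ex2 [Hx [Hf ->]]]]]].
    simpl in *. subst f. unfold phinv.
    assert (EE : x2 = C (C x2 x1) (inv x1)) by (rewrite <- C_assoc, C_invr, C_idr; auto; gs).
    rewrite (sec_rw _ (ar_phi u) _ _ ex2 EE).
    rewrite (ia_c2 _ _ _ _ _ _ ok (inv x1) (C x2 x1) (invpf2 _ x1 ex1) e2 _) by gs.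
    rewrite <- C_assoc, C_invr, C_idr; auto; gs.
Qed.

Definition PiGpd : Gpd.
Proof.
  refine (MkGpd PiOb PiAr ar_s ar_t Qidn Qcmp Qinv _ _ _ _ _ _ _ _ _ _ _);
    try (intros; reflexivity).
  - apply P_idl.
  - apply P_idr.
  - apply P_assoc.
  - apply P_invl.
  - apply P_invr.
Defined.


Lemma taupf (h : Ar B) h' (Eh : fa (tau B) h = h') f : fa g f = h' -> fa g (fa (tau A) f) = h.
Proof. intro e; rewrite (gm_a g), e, <- Eh, tau_a; auto. Qed.

Definition taus (h : Ar B) (phi : Sec h) h' (Eh : fa (tau B) h = h') : Sec h' :=
  fun f e => fa (tau TY) (phi (fa (tau A) f) (taupf h h' Eh f e)).

Lemma tau_ok b s b' s' h phi (ok : IsArr b s b' s' h phi) h' (Eh : fa (tau B) h = h')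
  (E0 : fa (tau B) (idn b) = idn (fo (tau B) b)) (E1 : fa (tau B) (idn b') = idn (fo (tau B) b')) :
  IsArr (fo (tau B) b) (taus _ s _ E0) (fo (tau B) b') (taus _ s' _ E1) h' (taus _ phi _ Eh).
Proof. unfold taus. constructor.
  - subst h'; rewrite fn_src, (ia_src _ _ _ _ _ _ ok); auto.
  - subst h'; rewrite fn_tgt, (ia_tgt _ _ _ _ _ _ ok); auto.
  - intros f e. rewrite (gm_a pY), (ia_p _ _ _ _ _ _ ok), tau_a; auto.
  - intros f k e ek Hk. rewrite fn_tgt, fn_src. f_equal. apply (ia_m1 _ _ _ _ _ _ ok); gs.
  - intros f k e ek Hk. rewrite fn_tgt, fn_src. f_equal. apply (ia_m2 _ _ _ _ _ _ ok); gs.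
  - intros f k e ek efk Hk.
    assert (EE : fa (tau A) (C f k) = C (fa (tau A) f) (fa (tau A) k)) by (apply fa_C; auto).
    rewrite (sec_rw _ phi _ _ _ EE).
    rewrite (ia_c1 _ _ _ _ _ _ ok _ _ (taupf h h' Eh f e) (taupf _ _ E0 k ek) _) by gs.
    apply fa_C. apply (ia_m1 _ _ _ _ _ _ ok); gs.
  - intros f k e ek efk Hk.
    assert (EE : fa (tau A) (C k f) = C (fa (tau A) k) (fa (tau A) f)) by (apply fa_C; auto).
    rewrite (sec_rw _ phi _ _ _ EE).
    rewrite (ia_c2 _ _ _ _ _ _ ok _ _ (taupf h h' Eh f e) (taupf _ _ E1 k ek) _) by gs.
    apply fa_C. apply (ia_m2 _ _ _ _ _ _ ok); gs.
Qed.

Definition Qtau_o (x : PiOb) : PiOb :=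
  MkPiOb (fo (tau B) (ob_b x)) (taus _ (ob_s x) _ (fn_idn _ _))
    (tau_ok _ _ _ _ _ _ (ob_ok x) _ (fn_idn _ _) (fn_idn _ _) (fn_idn _ _)).
Definition Qtau_a (u : PiAr) : PiAr :=
  MkPiAr (Qtau_o (ar_s u)) (Qtau_o (ar_t u)) (fa (tau B) (ar_h u)) (taus _ (ar_phi u) _ eq_refl)
    (tau_ok _ _ _ _ _ _ (ar_ok u) _ eq_refl (fn_idn _ _) (fn_idn _ _)).

Lemma Qtau_idn x : Qtau_a (Qidn x) = Qidn (Qtau_o x).
Proof. apply ar_eq; simpl; auto.
  - apply fn_idn.
  - intros f e1 e2; unfold taus; f_equal; apply sec_congr; auto. Qed.

Lemma Qtau_cmp (v u : PiAr) H H' : Qtau_a (Qcmp v u H) = Qcmp (Qtau_a v) (Qtau_a u) H'.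
Proof. apply ar_eq; simpl; auto.
  - apply fa_C, hcomp; auto.
  - intros f e1 e2.
    destruct (chi_dec (Qtau_a u) (Qtau_a v) H' f e2) as [x1 [x2 [ex1 [ex2 [Hx [Hf ->]]]]]].
    subst f. simpl. unfold taus.
    assert (EE : fa (tau A) (C x2 x1) = C (fa (tau A) x2) (fa (tau A) x1)) by (apply fa_C; auto).
    rewrite (sec_rw _ (chi u v H) _ _ _ EE).
    rewrite (chi_wd u v H _ _ (taupf _ _ eq_refl x1 ex1) (taupf _ _ eq_refl x2 ex2) _) by gs.
    apply fa_C; gs.
Qed.

Lemma Qtau_oo x : Qtau_o (Qtau_o x) = x.
Proof. apply ob_eq; simpl. apply tau_o.
  intros f e1 e2; unfold taus. rewrite tau_a. apply sec_congr, tau_a. Qed.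

Lemma Qtau_aa u : Qtau_a (Qtau_a u) = u.
Proof. apply ar_eq; simpl; try apply Qtau_oo. apply tau_a.
  intros f e1 e2; unfold taus. rewrite tau_a. apply sec_congr, tau_a. Qed.

Definition Qtau : Fn PiGpd PiGpd :=
  @MkFn PiGpd PiGpd Qtau_o Qtau_a (fun _ => eq_refl) (fun _ => eq_refl) Qtau_idn Qtau_cmp.

Definition PiGG : GpdG := MkGpdG PiGpd Qtau Qtau_oo Qtau_aa.

Definition pPi_fn : Fn PiGG B.
Proof.
  refine (@MkFn PiGG B ob_b ar_h _ _ _ _).
  - intro u; apply (ia_src _ _ _ _ _ _ (ar_ok u)).
  - intro u; apply (ia_tgt _ _ _ _ _ _ (ar_ok u)).
  - intro x; reflexivity.
  - intros v u H H'; simpl. symmetry; apply C_cmp.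
Defined.

Definition pPi : GMor PiGG B := MkGMor pPi_fn (fun _ => eq_refl) (fun _ => eq_refl).

Definition PiY : Over B := MkOver PiGG pPi.


Definition eps_o (z : Ob (tot (pb g PiY))) : Ob TY :=
  O (snd (proj1_sig z)) (fst (proj1_sig z)) (proj2_sig z).
Definition eps_a (z : Ar (tot (pb g PiY))) : Ar TY :=
  ar_phi (snd (proj1_sig z)) (fst (proj1_sig z)) (proj2_sig z).

Definition eps_fn : Fn (tot (pb g PiY)) TY.
Proof.
  refine (@MkFn (tot (pb g PiY)) TY eps_o eps_a _ _ _ _).
  - intros [[f u] e]; unfold eps_a, eps_o; simpl. rewrite ar_srcO. apply O_congr; auto.
  - intros [[f u] e]; unfold eps_a, eps_o; simpl. rewrite ar_tgtO. apply O_congr; auto.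
  - intros [[a x] e]; unfold eps_a, eps_o; simpl. apply ob_idn'.
  - intros [[f2 v] e2] [[f1 u] e1] H H'. unfold eps_a; simpl.
    rewrite C_cmp.
    assert (EE : cmp f2 f1 (f_equal (fun w => fst (proj1_sig w)) H) = C f2 f1) by apply C_cmp.
    rewrite (sec_rw _ (chi _ _ _) _ _ _ EE).
    apply chi_wd. apply (f_equal (fun w => fst (proj1_sig w)) H).
Defined.

Definition eps_gm : GMor (tot (pb g PiY)) TY.
Proof.
  refine (MkGMor eps_fn _ _).
  - intros [[a x] e]; cbn; unfold eps_o, O; cbn; unfold taus. rewrite fn_src. f_equal. f_equal.
    apply sec_congr. rewrite fn_idn, tau_o; auto.
  - intros [[f u] e]; cbn; unfold eps_a; cbn; unfold taus. f_equal. apply sec_congr, tau_a.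
Defined.

Definition eps : OMor A (pb g PiY) Y.
Proof.
  refine (MkOMor eps_gm _ _).
  - intros [[a x] e]; simpl; unfold eps_o, O. rewrite <- fn_src, (ia_p _ _ _ _ _ _ (ob_ok x)), src_idn; auto.
  - intros [[f u] e]; simpl; unfold eps_a. apply (ia_p _ _ _ _ _ _ (ar_ok u)).
Defined.


Section UP.
Variables (X : Over B) (f : OMor A (pb g X) Y).
Notation pX := (str X).

Definition Fphi (e : Ar (tot X)) (h : Ar B) (Eh : fa pX e = h) : Sec h :=
  fun k E => fa f (exist (fun p => fa g (fst p) = fa pX (snd p)) (k, e) (eq_trans E (eq_sym Eh))
    : Ar (tot (pb g X))).

Lemma pb_C (z2 z1 : Ar (tot (pb g X))) : tgt z1 = src z2 ->
  proj1_sig (C z2 z1) = (C (fst (proj1_sig z2)) (fst (proj1_sig z1)), C (snd (proj1_sig z2)) (snd (proj1_sig z1))).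
Proof. intro H. rewrite (C_spec _ _ _ H). destruct z2 as [[a2 b2] E2], z1 as [[a1 b1] E1]. cbn.
  rewrite !C_cmp; auto. Qed.

Lemma Fphi_ok e x1 x2 (E1 : src e = x1) (E2 : tgt e = x2) h Eh :
  IsArr (fo pX x1) (Fphi (idn x1) _ (fn_idn pX x1)) (fo pX x2) (Fphi (idn x2) _ (fn_idn pX x2)) h (Fphi e h Eh).
Proof. subst x1 x2 h. unfold Fphi. constructor.
  - apply fn_src.
  - apply fn_tgt.
  - intros k e'. rewrite (om_a f). reflexivity.
  - intros k' k e' ek Hk. rewrite fn_tgt, fn_src. f_equal. apply sig_eq; cbn. rewrite Hk, tgt_idn; auto.
  - intros k' k e' ek Hk. rewrite fn_tgt, fn_src. f_equal. apply sig_eq; cbn. rewrite Hk, src_idn; auto.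
  - intros k' k e' ek efk Hk. rewrite <- fa_C.
    + f_equal. apply sig_eq. rewrite pb_C; cbn. rewrite C_idr; auto.
      apply sig_eq; cbn. rewrite Hk, tgt_idn; auto.
    + apply sig_eq; cbn. rewrite Hk, tgt_idn; auto.
  - intros k' k e' ek efk Hk. rewrite <- fa_C.
    + f_equal. apply sig_eq. rewrite pb_C; cbn. rewrite C_idl; auto.
      apply sig_eq; cbn. rewrite Hk, src_idn; auto.
    + apply sig_eq; cbn. rewrite Hk, src_idn; auto.
Qed.

Definition u_o (x : Ob (tot X)) : PiOb :=
  MkPiOb (fo pX x) (Fphi (idn x) _ (fn_idn pX x)) (Fphi_ok (idn x) x x (src_idn _ x) (tgt_idn _ x) _ _).
Definition u_a (e : Ar (tot X)) : PiAr :=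
  MkPiAr (u_o (src e)) (u_o (tgt e)) (fa pX e) (Fphi e _ eq_refl) (Fphi_ok e _ _ eq_refl eq_refl _ eq_refl).

Lemma u_idn x : u_a (idn x) = Qidn (u_o x).
Proof. apply ar_eq; simpl.
  - f_equal; apply src_idn.
  - f_equal; apply tgt_idn.
  - apply fn_idn.
  - intros k e1 e2; unfold Fphi; f_equal; apply sig_eq; reflexivity.
Qed.

Lemma u_cmp e2 e1 H H' : u_a (cmp e2 e1 H) = Qcmp (u_a e2) (u_a e1) H'.
Proof. apply ar_eq; simpl.
  - f_equal; apply src_cmp.
  - f_equal; apply tgt_cmp.
  - rewrite C_cmp; apply fa_C; auto.
  - intros k E1 E2.
    destruct (chi_dec (u_a e1) (u_a e2) H' k E2) as [k1 [k2 [ek1 [ek2 [Hk [Hf ->]]]]]].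
    subst k. simpl. unfold Fphi. rewrite <- fa_C.
    + f_equal. apply sig_eq. rewrite pb_C; cbn. rewrite C_cmp; auto.
      apply sig_eq; cbn. rewrite Hk, H; auto.
    + apply sig_eq; cbn. rewrite Hk, H; auto.
Qed.

Lemma u_gm_o x : u_o (fo (tau (tot X)) x) = Qtau_o (u_o x).
Proof. apply ob_eq; simpl. apply (gm_o pX).
  intros k e1 e2. unfold taus, Fphi. rewrite <- (gm_a f). f_equal. apply sig_eq; cbn.
  rewrite tau_a, fn_idn; auto.
Qed.

Definition U_fn : Fn (tot X) PiGG :=
  @MkFn (tot X) PiGG u_o u_a (fun _ => eq_refl) (fun _ => eq_refl) u_idn u_cmp.

Lemma u_gm_a e : u_a (fa (tau (tot X)) e) = Qtau_a (u_a e).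
Proof. apply ar_eq; simpl.
  - rewrite fn_src; apply u_gm_o.
  - rewrite fn_tgt; apply u_gm_o.
  - apply (gm_a pX).
  - intros k e1 e2. unfold taus, Fphi. rewrite <- (gm_a f). f_equal. apply sig_eq; cbn.
    rewrite tau_a; auto.
Qed.

Definition U_gm : GMor (tot X) PiGG := MkGMor U_fn u_gm_o u_gm_a.
Definition U : OMor B X PiY := @MkOMor B X PiY U_gm (fun _ => eq_refl) (fun _ => eq_refl).

Lemma U_comp : comp_is eps (pbmap g U) f.
Proof. split.
  - intros [[a x] e]. cbn. unfold eps_o, O; cbn. unfold Fphi. rewrite fn_src. f_equal.
    apply sig_eq; cbn. rewrite !src_idn; auto.
  - intros [[k e] E]. cbn. unfold eps_a; cbn. unfold Fphi. f_equal. apply sig_eq; reflexivity.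
Qed.

Lemma U_uniq (u' : OMor B X PiY) : comp_is eps (pbmap g u') f -> fn_eq u' U.
Proof. intros [Hc1 Hc2].
  assert (Ho : forall x, fo u' x = u_o x).
  { intro x. apply ob_eq.
    - apply (om_o u' x).
    - intros k e1 e2.
      assert (E : fa g k = fa pX (idn x)) by (rewrite e2, fn_idn; auto).
      pose proof (Hc2 (exist (fun p => fa g (fst p) = fa pX (snd p)) (k, idn x) E)) as Hz.
      cbn in Hz. unfold eps_a in Hz; cbn in Hz.
      change (ob_s (fo u' x) k e1) with (ar_phi (Qidn (fo u' x)) k e1).
      rewrite (phi_congr (Qidn (fo u' x)) (fa u' (idn x)) k e1 (pf_ma A B g X PiY u' (k, idn x) E))
        by (symmetry; apply (fn_idn u')).
      etransitivity; [exact Hz|]. simpl. unfold Fphi. f_equal; apply sig_eq; reflexivity. }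
  split; auto.
  intro e. apply ar_eq.
  - change (ar_s (fa u' e)) with (src (fa u' e)). rewrite fn_src. apply Ho.
  - change (ar_t (fa u' e)) with (tgt (fa u' e)). rewrite fn_tgt. apply Ho.
  - apply (om_a u' e).
  - intros k e1 e2.
    assert (E : fa g k = fa pX e) by (rewrite e2; auto).
    pose proof (Hc2 (exist (fun p => fa g (fst p) = fa pX (snd p)) (k, e) E)) as Hz.
    cbn in Hz. unfold eps_a in Hz; cbn in Hz.
    rewrite (sec_congr _ _ k k e1 (pf_ma A B g X PiY u' (k, e) E)) by auto.
    etransitivity; [exact Hz|]. simpl. unfold Fphi. f_equal; apply sig_eq; reflexivity.
Qed.

End UP.

Lemma Pi_ra_Y (X : Over B) (f : OMor A (pb g X) Y) :
  exists u : OMor B X PiY, comp_is eps (pbmap g u) f /\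
    (forall u' : OMor B X PiY, comp_is eps (pbmap g u') f -> fn_eq u' u).
Proof. exists (U X f). split; [apply U_comp | apply U_uniq]. Qed.


Section Fib.
Variable x : PiOb.
Notation b := (ob_b x).
Notation s := (ob_s x).

Lemma O_p a E : fo pY (O x a E) = a.
Proof. unfold O. rewrite <- fn_src, (ia_p _ _ _ _ _ _ (ob_ok x)), src_idn; auto. Qed.

Record TD (c : Ob B) : Type := MkTD {
 td_t : Ar B; td_L : forall a, fo g a = c -> Ar A; td_M : forall a, fo g a = c -> Ar TY;
 td_ts : src td_t = c; td_tt : tgt td_t = b;
 td_Ls : forall a E, src (td_L a E) = a;
 td_Lg : forall a E, fa g (td_L a E) = td_t;
 td_Ms : forall a E E', src (td_M a E) = O x (tgt (td_L a E)) E';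
 td_Mp : forall a E, fa pY (td_M a E) = inv (td_L a E) }.
Arguments td_t {c}. Arguments td_L {c}. Arguments td_M {c}.

Lemma td_Ms' c (D : TD c) a E : src (td_M D a E) = O x (tgt (td_L D a E)) (tgtpf _ _ _ (td_tt c D) (td_Lg c D a E)).
Proof. apply td_Ms. Qed.
Lemma td_L_congr c (D : TD c) a1 a2 E1 E2 : a1 = a2 -> td_L D a1 E1 = td_L D a2 E2.
Proof. intro; subst; f_equal; apply proof_irrelevance. Qed.
Lemma td_M_congr c (D : TD c) a1 a2 E1 E2 : a1 = a2 -> td_M D a1 E1 = td_M D a2 E2.
Proof. intro; subst; f_equal; apply proof_irrelevance. Qed.

Ltac gs_extra ::= first [ rewrite ob_src | rewrite ob_tgt | rewrite ar_srcO | rewrite ar_tgtO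
  | rewrite td_Ls | rewrite td_Ms' ].

Section Psi.
Variables (c1 c2 : Ob B) (D1 : TD c1) (D2 : TD c2) (hf : Ar B) (Ehf : C (inv (td_t D2)) (td_t D1) = hf).

Lemma psi_E1 f : fa g f = hf -> fo g (src f) = c1.
Proof. intro e. rewrite <- fn_src, e, <- Ehf, src_C, (td_ts _ D1); auto.
  rewrite src_inv, (td_tt _ D1), (td_tt _ D2); auto. Qed.
Lemma psi_E2 f : fa g f = hf -> fo g (tgt f) = c2.
Proof. intro e. rewrite <- fn_tgt, e, <- Ehf, tgt_C, tgt_inv, (td_ts _ D2); auto.
  rewrite src_inv, (td_tt _ D1), (td_tt _ D2); auto. Qed.

Lemma psi_P f (e : fa g f = hf) :
  fa g (C (td_L D2 (tgt f) (psi_E2 f e)) (C f (inv (td_L D1 (src f) (psi_E1 f e))))) = idn b.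
Proof.
  pose proof (td_tt _ D1) as T1. pose proof (td_tt _ D2) as T2.
  rewrite fa_C, fa_C, fn_inv, !td_Lg, e, <- Ehf.
  - rewrite <- (C_assoc _ (inv (td_t D2)) (td_t D1) (inv (td_t D1))), C_invr, C_idr, C_invr; try gs.
  - gs.
  - gs.
Qed.

Definition Psi : Sec hf := fun f e =>
  C (td_M D2 (tgt f) (psi_E2 f e))
    (C (s _ (psi_P f e)) (inv (td_M D1 (src f) (psi_E1 f e)))).

Lemma Psi_src f e : src (Psi f e) = tgt (td_M D1 (src f) (psi_E1 f e)).
Proof. unfold Psi. gs. Qed.
Lemma Psi_tgt f e : tgt (Psi f e) = tgt (td_M D2 (tgt f) (psi_E2 f e)).
Proof. unfold Psi. gs. Qed.

Lemma Psi_p f e : fa pY (Psi f e) = f.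
Proof. unfold Psi. rewrite !fa_C, fn_inv, !td_Mp, (ia_p _ _ _ _ _ _ (ob_ok x)), inv_inv.
  all: try gs.
  rewrite <- C_assoc, <- (C_assoc _ f), C_invl, C_idr, C_assoc, C_invl, C_idl. all: try gs.
Qed.
End Psi.

Lemma Psi_comp c1 c2 c3 (D1 : TD c1) (D2 : TD c2) (D3 : TD c3) h12 E12 h23 E23 h13 E13 f1 f2 e1 e2 e :
  tgt f1 = src f2 ->
  Psi _ _ D1 D3 h13 E13 (C f2 f1) e = C (Psi _ _ D2 D3 h23 E23 f2 e2) (Psi _ _ D1 D2 h12 E12 f1 e1).
Proof. intro H12. unfold Psi.
  assert (HM3 : td_M D3 (tgt (C f2 f1)) (psi_E2 _ _ D1 D3 _ E13 _ e) = td_M D3 (tgt f2) (psi_E2 _ _ D2 D3 _ E23 _ e2))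
    by (apply td_M_congr; gs).
  assert (HL3 : td_L D3 (tgt (C f2 f1)) (psi_E2 _ _ D1 D3 _ E13 _ e) = td_L D3 (tgt f2) (psi_E2 _ _ D2 D3 _ E23 _ e2))
    by (apply td_L_congr; gs).
  assert (HM1 : td_M D1 (src (C f2 f1)) (psi_E1 _ _ D1 D3 _ E13 _ e) = td_M D1 (src f1) (psi_E1 _ _ D1 D2 _ E12 _ e1))
    by (apply td_M_congr; gs).
  assert (HL1 : td_L D1 (src (C f2 f1)) (psi_E1 _ _ D1 D3 _ E13 _ e) = td_L D1 (src f1) (psi_E1 _ _ D1 D2 _ E12 _ e1))
    by (apply td_L_congr; gs).
  assert (HM2 : td_M D2 (src f2) (psi_E1 _ _ D2 D3 _ E23 _ e2) = td_M D2 (tgt f1) (psi_E2 _ _ D1 D2 _ E12 _ e1))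
    by (apply td_M_congr; gs).
  assert (HL2 : td_L D2 (src f2) (psi_E1 _ _ D2 D3 _ E23 _ e2) = td_L D2 (tgt f1) (psi_E2 _ _ D1 D2 _ E12 _ e1))
    by (apply td_L_congr; gs).
  assert (EQ : C (td_L D3 (tgt (C f2 f1)) (psi_E2 _ _ D1 D3 _ E13 _ e))
                 (C (C f2 f1) (inv (td_L D1 (src (C f2 f1)) (psi_E1 _ _ D1 D3 _ E13 _ e))))
             = C (C (td_L D3 (tgt f2) (psi_E2 _ _ D2 D3 _ E23 _ e2))
                    (C f2 (inv (td_L D2 (src f2) (psi_E1 _ _ D2 D3 _ E23 _ e2)))))
                 (C (td_L D2 (tgt f1) (psi_E2 _ _ D1 D2 _ E12 _ e1))
                    (C f1 (inv (td_L D1 (src f1) (psi_E1 _ _ D1 D2 _ E12 _ e1)))))).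
  { rewrite HL3, HL1, HL2. rnorm. rewrite C_cancel_l by gs. reflexivity. }
  rewrite (sec_rw _ s _ _ _ EQ).
  rewrite (ia_c1 _ _ _ _ _ _ (ob_ok x) _ _ (psi_P _ _ D2 D3 _ E23 f2 e2) (psi_P _ _ D1 D2 _ E12 f1 e1) _) by gs.
  rewrite HM3, HM1, HM2.
  rnorm. rewrite C_cancel_l by gs. reflexivity.
Qed.


Lemma inv_idn (G : Gpd) (a : Ob G) : inv (idn a) = idn a.
Proof. symmetry. assert (H : tgt (idn a) = src (idn a)) by gs.
  apply (inv_unique _ _ _ H). rewrite C_cmp, C_idl; gs. Qed.

Definition D0 : TD b.
Proof.
  refine (MkTD b (idn b) (fun a _ => idn a) (fun a E => idn (O x a E)) _ _ _ _ _ _).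
  - apply src_idn.
  - apply tgt_idn.
  - intros; apply src_idn.
  - intros; apply idpf; auto.
  - intros. rewrite src_idn. apply O_congr. rewrite tgt_idn; auto.
  - intros. rewrite fn_idn, O_p, inv_idn; auto.
Defined.

Lemma E00 : C (inv (td_t D0)) (td_t D0) = idn b.
Proof. simpl. rewrite inv_idn, C_idl; gs. Qed.

Lemma Psi_D0 k e : Psi _ _ D0 D0 (idn b) E00 k e = s k e.
Proof. unfold Psi; simpl.
  assert (EQ : C (idn (tgt k)) (C k (inv (idn (src k)))) = k)
    by (rewrite (inv_idn A), C_idr, C_idl; gs).
  rewrite (sec_rw _ s _ _ _ EQ), (inv_idn TY), C_idr, C_idl.
  - apply sec_congr; auto.
  - gs.
  - gs.
Qed.

Variable yfib : proj_fib pY.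
Definition ylft y (k : Ar A) (H : src k = fo pY y) : Ar TY :=
  proj1_sig (constructive_indefinite_description _ (yfib y k H)).
Lemma ylft_src y k H : src (ylft y k H) = y.
Proof. unfold ylft; destruct (constructive_indefinite_description _ _) as [z [? ?]]; auto. Qed.
Lemma ylft_p y k H : fa pY (ylft y k H) = k.
Proof. unfold ylft; destruct (constructive_indefinite_description _ _) as [z [? ?]]; auto. Qed.

Section Lift.
Variables (h : Ar B) (Hh : src h = b).

Lemma Lpf a : fo g a = tgt h -> src (inv h) = fo g a.
Proof. intro E; rewrite src_inv; auto. Qed.
Definition L' a E := lft a (inv h) (Lpf a E).
Lemma L'pf a E : fo g (tgt (L' a E)) = b.
Proof. apply (tgtpf (inv h)). rewrite tgt_inv; auto. apply lft_g. Qed.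
Lemma Mpf a E : src (inv (L' a E)) = fo pY (O x (tgt (L' a E)) (L'pf a E)).
Proof. rewrite src_inv, O_p; auto. Qed.
Definition M' a E := ylft _ _ (Mpf a E).

Definition D1 : TD (tgt h).
Proof.
  refine (MkTD (tgt h) (inv h) L' M' _ _ _ _ _ _).
  - apply src_inv.
  - rewrite tgt_inv; auto.
  - intros; apply lft_src.
  - intros; apply lft_g.
  - intros. unfold M'. rewrite ylft_src. apply O_congr; auto.
  - intros. unfold M'. apply ylft_p.
Defined.

Lemma E11 : C (inv (td_t D1)) (td_t D1) = idn (tgt h).
Proof. simpl. rewrite inv_inv, C_invr; auto. Qed.
Lemma E01 : C (inv (td_t D1)) (td_t D0) = h.
Proof. simpl. rewrite inv_inv, C_idr; auto. Qed.

Definition s' := Psi _ _ D1 D1 _ E11.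
Definition phi' := Psi _ _ D0 D1 _ E01.

Lemma ok' : IsArr (tgt h) s' (tgt h) s' (idn (tgt h)) s'.
Proof. unfold s'. constructor.
  - apply src_idn.
  - apply tgt_idn.
  - intros; apply Psi_p.
  - intros. rewrite Psi_tgt, Psi_src. f_equal. apply td_M_congr; auto.
  - intros. rewrite Psi_tgt, Psi_src. f_equal. apply td_M_congr; auto.
  - intros. apply Psi_comp; auto.
  - intros. apply Psi_comp; auto.
Qed.

Definition x' : PiOb := MkPiOb (tgt h) s' ok'.

Lemma okA : IsArr b s (tgt h) s' h phi'.
Proof. unfold s', phi'. constructor.
  - auto.
  - auto.
  - intros; apply Psi_p.
  - intros. rewrite Psi_src. simpl. gs.
  - intros. rewrite Psi_tgt, Psi_src. f_equal. apply td_M_congr; auto.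
  - intros f k e ek efk Hk. rewrite <- (Psi_D0 k ek). apply Psi_comp; auto.
  - intros. apply Psi_comp; auto.
Qed.

Definition ht : PiAr := MkPiAr x x' h phi' okA.
End Lift.

End Fib.

Lemma Pi_fib : proj_fib pY -> proj_fib (str PiY).
Proof. intros yfib x h Hh. exists (ht x yfib h Hh). split; reflexivity. Qed.

End PiC.

Definition Fcomp {G1 G2 G3 : Gpd} (F2 : Fn G2 G3) (F1 : Fn G1 G2) : Fn G1 G3.
Proof.
  refine (@MkFn G1 G3 (fun x => fo F2 (fo F1 x)) (fun f => fa F2 (fa F1 f)) _ _ _ _); intros.
  - rewrite !fn_src; auto.
  - rewrite !fn_tgt; auto.
  - rewrite !fn_idn; auto.
  - rewrite !C_cmp, !fa_C; auto. gs.
Defined.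

Definition Fid (G : Gpd) : Fn G G.
Proof.
  refine (@MkFn G G (fun x => x) (fun f => f) _ _ _ _); intros; auto.
  apply cmp_congr; auto.
Defined.

Definition Gcomp {X Y Z : GpdG} (F2 : GMor Y Z) (F1 : GMor X Y) : GMor X Z.
Proof.
  refine (MkGMor (Fcomp F2 F1) _ _); intros; simpl.
  - rewrite (gm_o F1), (gm_o F2); auto.
  - rewrite (gm_a F1), (gm_a F2); auto.
Defined.

Definition Gid (X : GpdG) : GMor X X := MkGMor (Fid X) (fun _ => eq_refl) (fun _ => eq_refl).

Definition Ocomp {B : GpdG} {X Y Z : Over B} (F2 : OMor B Y Z) (F1 : OMor B X Y) : OMor B X Z.
Proof.
  refine (@MkOMor B X Z (Gcomp F2 F1) _ _); intros; simpl.
  - rewrite (om_o F2), (om_o F1); auto.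
  - rewrite (om_a F2), (om_a F1); auto.
Defined.

Definition Oid {B : GpdG} (X : Over B) : OMor B X X := @MkOMor B X X (Gid (tot X)) (fun _ => eq_refl) (fun _ => eq_refl).

Theorem lemma4p10 (A B : GpdG) (g : GMor A B) :
  proj_fib g ->
  (exists (Pi : Over A -> Over B) (eps : forall Y : Over A, OMor A (pb g (Pi Y)) Y),
      right_adjoint g Pi eps) /\
  (forall (Pi : Over A -> Over B) (eps : forall Y : Over A, OMor A (pb g (Pi Y)) Y),
      right_adjoint g Pi eps ->
      forall Y : Over A, proj_fib (str Y) -> proj_fib (str (Pi Y))).
Proof.
  intro gfib. split.
  - exists (fun Y => PiY A B g Y gfib), (fun Y => eps A B g Y gfib).
    intros Y X f. apply Pi_ra_Y.
  - intros Pi eps' Hra Y yfib.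
    destruct (Pi_ra_Y A B g Y gfib (Pi Y) (eps' Y)) as [v [[Hv1 Hv2] _]].
    destruct (Hra Y (PiY A B g Y gfib) (eps A B g Y gfib)) as [u [[Hu1 Hu2] _]].
    destruct (Hra Y (Pi Y) (eps' Y)) as [u0 [_ Hu0]].
    assert (Hw : fn_eq (Ocomp u v) u0).
    { apply Hu0. split.
      - intro z. rewrite <- (Hv1 z), <- (Hu1 (fo (pbmap g v) z)). f_equal. apply sig_eq; reflexivity.
      - intro z. rewrite <- (Hv2 z), <- (Hu2 (fa (pbmap g v) z)). f_equal. apply sig_eq; reflexivity. }
    assert (Hid : fn_eq (Oid (Pi Y)) u0).
    { apply Hu0. split.
      - intro z. f_equal. apply sig_eq; destruct z as [[a x] e]; reflexivity.
      - intro z. f_equal. apply sig_eq; destruct z as [[a x] e]; reflexivity. }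
    intros x h Hh.
    assert (Hh' : src h = fo (str (PiY A B g Y gfib)) (fo v x)) by (rewrite (om_o v x); auto).
    destruct (Pi_fib A B g Y gfib yfib (fo v x) h Hh') as [ht [Hs Hp]].
    exists (fa u ht). split.
    + rewrite fn_src, Hs. destruct Hw as [Hw _]. destruct Hid as [Hi _].
      specialize (Hw x). specialize (Hi x). simpl in Hw, Hi. etransitivity; [exact Hw | symmetry; exact Hi].
    + rewrite (om_a u ht). exact Hp.
Qed.
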